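(* Let $F=\mathrm{id}_{K_{\mathrm{cmn}}}\otimes(R\otimes_{R_{\mathrm p}}F_{\mathrm p}):\widehat{\gamma}_{\mathrm{par}}\to\widehat{\gamma}_{\mathrm{vir}}$ and $G=\mathrm{id}_{K_{\mathrm{cmn}}}\otimes(R\otimes_{R_{\mathrm p}}G_{\mathrm p}):\widehat{\gamma}_{\mathrm{vir}}\to\widehat{\gamma}_{\mathrm{hor}}$ be the saddle morphisms, where $F_{\mathrm p}$ is given on the even part by $\begin{pmatrix}0&1\\ q_2^2-q_1^2C&0\end{pmatrix}$ and on the odd part by $\begin{pmatrix}q_2&-q_1\\ q_1C&-q_2\end{pmatrix}$, and $G_{\mathrm p}$ is given on the even part by $\begin{pmatrix}0&1\\ p_2^2-p_1^2C&0\end{pmatrix}$ and on the odd part by $\begin{pmatrix}p_2&-p_1\\ p_1C&-p_2\end{pmatrix}$. Then the composition is null-homotopic: $G\circ F\simeq 0$.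
   Context: Fix $N\ge1$, $w(x)=x^{2N+1}$, $W(x,y)=xy^2+x^{2N+1}$, iterated divided differences $w(x_1,\dots,x_n)=\frac{w(x_1,\dots,x_{n-2},x_{n-1})-w(x_1,\dots,x_{n-2},x_n)}{x_{n-1}-x_n}$. $R=\mathbb{Q}[x_1,\dots,x_4,y_1,\dots,y_4]$, $W_4=\sum W(x_i,y_i)$. Matrix factorizations of $V$: $\mathbb{Z}/2$-graded free modules with odd $D$, $D^2=V$; a morphism is null-homotopic ($\simeq0$) if it equals $DX+XD$ for some odd $R$-linear $X$. $A(i,j)$ is the Koszul matrix factorization (tensor product over $R$ of $Re_0\oplus Re_1$, $De_0=be_1$, $De_1=ae_0$ for each row $(a\mid b)$) with rows $(y_j+y_i\mid x_j(y_j-y_i))$, $(x_j+x_i\mid y_i^2+w(-x_i,x_j))$; $\widehat{\gamma}_{\mathrm{par}}=A(1,3)\otimes A(2,4)$, $\widehat{\gamma}_{\mathrm{vir}}=A(1,4)\otimes A(2,3)$, $\widehat{\gamma}_{\mathrm{hor}}=A(1,2)\otimes A(3,4)$. $R_{\mathrm p}=\mathbb{Q}[p_1,p_2,q_1,q_2,r_1,r_2,C]$, $W_{4,\mathrm p}=p_1q_2r_2+q_1p_2r_2+r_1p_2q_2+p_1q_1r_1C$. Proper matrix factorizations, each of the form $R_{\mathrm p}^2$ (odd) $\xrightarrow{P}$ $R_{\mathrm p}^2$ (even) $\xrightarrow{Q}$ $R_{\mathrm p}^2$ (odd): $\widehat{\gamma}_{\mathrm{par,p}}$ with $P=\begin{pmatrix}p_2&p_1\\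 q_2r_2+q_1r_1C&-(q_2r_1+q_1r_2)\end{pmatrix}$, $Q=\begin{pmatrix}q_1r_2+q_2r_1&p_1\\ q_2r_2+q_1r_1C&-p_2\end{pmatrix}$; $\widehat{\gamma}_{\mathrm{vir,p}}$ with $P=\begin{pmatrix}r_2&r_1\\ p_2q_2+p_1q_1C&-(p_1q_2+p_2q_1)\end{pmatrix}$, $Q=\begin{pmatrix}p_1q_2+p_2q_1&r_1\\ p_2q_2+p_1q_1C&-r_2\end{pmatrix}$; $\widehat{\gamma}_{\mathrm{hor,p}}$ with $P=\begin{pmatrix}q_2&q_1\\ p_2r_2+p_1r_1C&-(p_1r_2+p_2r_1)\end{pmatrix}$, $Q=\begin{pmatrix}p_1r_2+p_2r_1&q_1\\ p_2r_2+p_1r_1C&-q_2\end{pmatrix}$. $\phi_{\mathrm p}:R_{\mathrm p}\to R$: $p_1\mapsto x_2+x_4$, $q_1\mapsto x_3+x_4$, $r_1\mapsto x_1+x_4$, $p_2\mapsto y_2+y_4$, $q_2\mapsto y_3+y_4$, $r_2\mapsto y_1+y_4$, $C\mapsto w(x_1,x_2,-x_3,x_4)+w(x_1,-x_1,x_2,x_4)+w(x_1,-x_1,-x_2,x_4)$; $R\otimes_{R_{\mathrm p}}$ is base change along $\phi_{\mathrm p}$. $K_{\mathrm{cmn}}$ is the Koszul matrix factorization with rows $(x_1+x_2+x_3+x_4\mid A)$, $(y_1+\dots+y_4\mid B)$, $A=-(y_3+y_4)(y_1+y_2+y_4)-y_1y_2+w(-x_1,x_3)+(x_2+x_4)w(x_1,x_2,-x_3)-(x_2+x_4)(x_1+x_4)(w(x_1,-x_1,x_2,x_4)+w(x_1,-x_1,-x_2,x_4))$,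 $B=x_1y_1+x_2y_2+x_3y_3-x_4y_4$; $K_{\mathrm{cmn}}\otimes_R(R\otimes_{R_{\mathrm p}}\widehat{\gamma}_{\bullet,\mathrm p})\cong\widehat{\gamma}_\bullet$ for $\bullet\in\{\mathrm{par},\mathrm{vir},\mathrm{hor}\}$, and $F,G$ are regarded as morphisms between the $\widehat{\gamma}_\bullet$ via these isomorphisms. *)

(* Defs.v *)
From HB Require Import structures.
From mathcomp Require Import all_boot all_order all_algebra.
From mathcomp Require Import mpoly.
Set Implicit Arguments. Unset Strict Implicit. Unset Printing Implicit Defensive.
Import GRing.Theory.
Local Open Scope ring_scope.

(* R = Q[x1..x4,y1..y4]: variables 'X_0..'X_3 are x1..x4, 'X_4..'X_7 are y1..y4 *)
Definition R := {mpoly rat[8]}.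
Definition Rp := {mpoly rat[7]}.

Definition xv (i : nat) : R := 'X_(inord i.-1).
Definition yv (i : nat) : R := 'X_(inord (i + 3)).

Definition p1 : Rp := 'X_(inord 0).
Definition p2 : Rp := 'X_(inord 1).
Definition q1 : Rp := 'X_(inord 2).
Definition q2 : Rp := 'X_(inord 3).
Definition r1 : Rp := 'X_(inord 4).
Definition r2 : Rp := 'X_(inord 5).
Definition Cp : Rp := 'X_(inord 6).

(* complete homogeneous symmetric polynomial h_d(s) evaluated in R *)
Fixpoint hcomp (d : nat) (s : seq R) : R :=
  match s with
  | [::] => (d == 0%N)%:R
  | a :: s' => \sum_(k < d.+1) a ^+ k * hcomp (d - k) s'
  end.

(* iterated divided difference of w(x) = x^(2N+1):
   w(a_1,...,a_n) = h_(2N+2-n)(a_1,...,a_n)  (closed form) *)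
Definition wdd (N : nat) (s : seq R) : R := hcomp ((2 * N + 2) - size s) s.

(* a graded free module of rank rk, basis vector i has parity par i
   (false = even, true = odd); dif is the matrix of D acting on columns *)
Record gmf := GMF { rk : nat; par : 'I_rk -> bool; dif : 'M[R]_rk }.
Arguments par : clear implicits.
Arguments dif : clear implicits.

Lemma tidx1_proof m n (k : 'I_(m * n)) : (k %/ n < m)%N.
Proof. case: k => k /=; case: n => [|n]; first by rewrite muln0. by rewrite ltn_divLR. Qed.
Lemma tidx2_proof m n (k : 'I_(m * n)) : (k %% n < n)%N.
Proof. by case: k => k /=; case: n => [|n]; rewrite ?muln0 // ltn_mod. Qed.
Definition tidx1 m n (k : 'I_(m * n)) : 'I_m := Ordinal (tidx1_proof k).
Definition tidx2 m n (k : 'I_(m * n)) : 'I_n := Ordinal (tidx2_proof k).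

(* tensor product: D(u (x) v) = Du (x) v + (-1)^|u| u (x) Dv *)
Definition tens (M N : gmf) : gmf :=
  @GMF (rk M * rk N)
    (fun k => par M (tidx1 k) (+) par N (tidx2 k))
    (\matrix_(k, l)
       (dif M (tidx1 k) (tidx1 l) * (tidx2 k == tidx2 l)%:R
        + (-1) ^+ par M (tidx1 l) * (tidx1 k == tidx1 l)%:R
            * dif N (tidx2 k) (tidx2 l))).

Definition idtens (m n n' : nat) (f : 'M[R]_(n', n)) : 'M[R]_(m * n', m * n) :=
  \matrix_(k, l) ((tidx1 k == tidx1 l)%:R * f (tidx2 k) (tidx2 l)).

Definition kos (a b : R) : gmf :=
  @GMF 2 (fun i => i == 1 :> nat)
    (\matrix_(i, j) (if (i == 0 :> nat) && (j == 1 :> nat) then a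
                     else if (i == 1 :> nat) && (j == 0 :> nat) then b else 0)).

Definition nullhtp (M N : gmf) (f : 'M[R]_(rk N, rk M)) : Prop :=
  exists X : 'M[R]_(rk N, rk M),
    (forall i j, par N i = par M j -> X i j = 0) /\
    f = dif N *m X + X *m dif M.
Arguments nullhtp : clear implicits.

Definition phi_p (N : nat) : 7.-tuple R :=
  [tuple xv 2 + xv 4; yv 2 + yv 4; xv 3 + xv 4; yv 3 + yv 4;
         xv 1 + xv 4; yv 1 + yv 4;
         wdd N [:: xv 1; xv 2; - xv 3; xv 4] + wdd N [:: xv 1; - xv 1; xv 2; xv 4]
         + wdd N [:: xv 1; - xv 1; - xv 2; xv 4]].

(* base change R (x)_{R_p} - along phi_p *)
Definition bc (N : nat) (m n : nat) (A : 'M[Rp]_(m, n)) : 'M[R]_(m, n) :=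
  map_mx (comp_mpoly (phi_p N)) A.

Definition mx2 (a b c d : Rp) : 'M[Rp]_2 :=
  \matrix_(i, j) (if i == 0 :> nat then (if j == 0 :> nat then a else b)
                  else (if j == 0 :> nat then c else d)).

(* proper MF R_p^2 (odd) --P--> R_p^2 (even) --Q--> R_p^2 (odd), base changed;
   basis: indices 0,1 even, 2,3 odd *)
Definition pmf (N : nat) (P Q : 'M[Rp]_2) : gmf :=
  @GMF 4 (fun i => (2 <= i)%N) (bc N (block_mx 0 P Q 0 : 'M[Rp]_(2 + 2))).

Definition gpar_p (N : nat) : gmf :=
  pmf N (mx2 p2 p1 (q2 * r2 + q1 * r1 * Cp) (- (q2 * r1 + q1 * r2)))
        (mx2 (q1 * r2 + q2 * r1) p1 (q2 * r2 + q1 * r1 * Cp) (- p2)).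
Definition gvir_p (N : nat) : gmf :=
  pmf N (mx2 r2 r1 (p2 * q2 + p1 * q1 * Cp) (- (p1 * q2 + p2 * q1)))
        (mx2 (p1 * q2 + p2 * q1) r1 (p2 * q2 + p1 * q1 * Cp) (- r2)).
Definition ghor_p (N : nat) : gmf :=
  pmf N (mx2 q2 q1 (p2 * r2 + p1 * r1 * Cp) (- (p1 * r2 + p2 * r1)))
        (mx2 (p1 * r2 + p2 * r1) q1 (p2 * r2 + p1 * r1 * Cp) (- q2)).

Definition Acmn (N : nat) : R :=
  - (yv 3 + yv 4) * (yv 1 + yv 2 + yv 4) - yv 1 * yv 2 + wdd N [:: - xv 1; xv 3]
  + (xv 2 + xv 4) * wdd N [:: xv 1; xv 2; - xv 3]
  - (xv 2 + xv 4) * (xv 1 + xv 4)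
      * (wdd N [:: xv 1; - xv 1; xv 2; xv 4] + wdd N [:: xv 1; - xv 1; - xv 2; xv 4]).
Definition Bcmn : R := xv 1 * yv 1 + xv 2 * yv 2 + xv 3 * yv 3 - xv 4 * yv 4.

Definition Kcmn (N : nat) : gmf :=
  tens (kos (xv 1 + xv 2 + xv 3 + xv 4) (Acmn N)) (kos (yv 1 + yv 2 + yv 3 + yv 4) Bcmn).

Definition gpar N := tens (Kcmn N) (gpar_p N).
Definition gvir N := tens (Kcmn N) (gvir_p N).
Definition ghor N := tens (Kcmn N) (ghor_p N).

Definition pmor (N : nat) (E O : 'M[Rp]_2) : 'M[R]_4 :=
  bc N (block_mx E 0 0 O : 'M[Rp]_(2 + 2)).

Definition Fp_mor N := pmor N (mx2 0 1 (q2 ^+ 2 - q1 ^+ 2 * Cp) 0) (mx2 q2 (- q1) (q1 * Cp) (- q2)).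
Definition Gp_mor N := pmor N (mx2 0 1 (p2 ^+ 2 - p1 ^+ 2 * Cp) 0) (mx2 p2 (- p1) (p1 * Cp) (- p2)).

Definition Fmor N : 'M[R]_(rk (gvir N), rk (gpar N)) := idtens 4 (Fp_mor N).
Definition Gmor N : 'M[R]_(rk (ghor N), rk (gvir N)) := idtens 4 (Gp_mor N).

(* Main.v *)
Require Import Defs.
From mathcomp Require Import all_boot all_order all_algebra.
From mathcomp Require Import mpoly.
From mathcomp Require Import ring.
Set Implicit Arguments. Unset Strict Implicit. Unset Printing Implicit Defensive.
Import GRing.Theory.
Local Open Scope ring_scope.
Lemma tpair_proof a b (i : 'I_a) (j : 'I_b) : (i * b + j < a * b)%N.
Proof.
case: i j => i Hi [j Hj] /=.
apply: (@leq_trans (i * b + b)); first by rewrite ltn_add2l.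
by rewrite -mulSnr leq_mul2r Hi orbT.
Qed.
Definition tpair a b (i : 'I_a) (j : 'I_b) : 'I_(a * b) := Ordinal (tpair_proof i j).

Lemma tidx1_pair a b (i : 'I_a) (j : 'I_b) : tidx1 (tpair i j) = i.
Proof.
apply/val_inj => /=. case: j => j Hj /=.
by rewrite divnMDl ?(leq_ltn_trans _ Hj) // divn_small // addn0.
Qed.
Lemma tidx2_pair a b (i : 'I_a) (j : 'I_b) : tidx2 (tpair i j) = j.
Proof.
apply/val_inj => /=. case: j => j Hj /=.
by rewrite modnMDl modn_small.
Qed.
Lemma tpair_idx a b (k : 'I_(a * b)) : tpair (tidx1 k) (tidx2 k) = k.
Proof. by apply/val_inj => /=; rewrite -divn_eq. Qed.

Lemma sum_tidx a b (F : 'I_(a * b) -> R) :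
  \sum_(k < a * b) F k = \sum_(i < a) \sum_(j < b) F (tpair i j).
Proof.
rewrite pair_big /=.
rewrite (reindex (fun k : 'I_(a * b) => (tidx1 k, tidx2 k))) /=.
  by apply: eq_bigr => k _; rewrite tpair_idx.
exists (fun p : 'I_a * 'I_b => tpair p.1 p.2) => [k _|[i j] _] /=.
  by rewrite tpair_idx.
by rewrite tidx1_pair tidx2_pair.
Qed.

Lemma sum_d1 n (j : 'I_n) (G : 'I_n -> R) : \sum_i (i == j)%:R * G i = G j.
Proof.
rewrite (bigD1 j) //= eqxx mul1r big1 ?addr0 // => i /negbTE ->.
by rewrite mul0r.
Qed.
Lemma sum_d2 n (j : 'I_n) (G : 'I_n -> R) : \sum_i (j == i)%:R * G i = G j.
Proof. by rewrite -(sum_d1 j); apply: eq_bigr => i _; rewrite eq_sym. Qed.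
Definition oddg (M : gmf) := forall i j, par M i = par M j -> dif M i j = 0.

Lemma sgn_opp (b c : bool) : b != c -> (-1) ^+ b + (-1) ^+ c = 0 :> R.
Proof. by case: b; case: c => //= _; rewrite expr1 expr0 ?addNr ?subrr. Qed.

Lemma tens_odd M N : oddg M -> oddg N -> oddg (tens M N).
Proof.
move=> oM oN k l /= Hp; rewrite mxE.
have [e1|ne1] := eqVneq (tidx1 k) (tidx1 l);
have [e2|ne2] := eqVneq (tidx2 k) (tidx2 l).
- by rewrite e1 e2 in Hp *; rewrite oM ?oN // mul0r mulr0 add0r.
- rewrite e1 in Hp *; rewrite oN; last by move: Hp; case: (par M _); case: (par N _); case: (par N _).
  by rewrite oM // mul0r mulr0 add0r.
- rewrite e2 in Hp *; rewrite oM; last by move: Hp; case: (par N _); case: (par M _); case: (par M _).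
  by rewrite !(mulr0, mul0r, addr0, mulr0n).
- by rewrite !(mulr0, mul0r, addr0, mulr0n).
Qed.

Lemma kos_odd a b : oddg (kos a b).
Proof.
move=> i j /=; rewrite mxE.
by case: i => [[|[|//]] Hi]; case: j => [[|[|//]] Hj].
Qed.

Lemma tens_htp (K P Q : gmf) (H f : 'M[R]_(rk Q, rk P)) :
  oddg K ->
  (forall i j, par Q i = par P j -> H i j = 0) ->
  f = dif Q *m H + H *m dif P ->
  nullhtp (tens K P) (tens K Q) (idtens (rk K) f).
Proof.
move=> oK Hodd Hf.
pose s i := (-1) ^+ par K i : R.
exists (\matrix_(k, l) ((tidx1 k == tidx1 l)%:R * s (tidx1 k) * H (tidx2 k) (tidx2 l))).
split.
  move=> k l /= Hp; rewrite mxE.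
  have [e1|ne1] := eqVneq (tidx1 k) (tidx1 l); last by rewrite !mul0r.
  rewrite Hodd ?mulr0 //.
  by move: Hp; rewrite e1; case: (par K _); case: (par Q _); case: (par P _).
apply/matrixP => k l; rewrite !mxE /= !sum_tidx.
set k1 := tidx1 k; set k2 := tidx2 k; set l1 := tidx1 l; set l2 := tidx2 l.
under eq_bigr => i _ do under eq_bigr => j _ do rewrite !mxE tidx1_pair tidx2_pair.
under [X in _ = _ + X]eq_bigr => i _ do under eq_bigr => j _ do rewrite !mxE tidx1_pair tidx2_pair.
rewrite Hf !mxE -/k1 -/k2 -/l1 -/l2 /s; clearbody k1 k2 l1 l2.
rewrite (eq_bigr (fun i => (i == l1)%:R * \sum_j ((k2 == j)%:R * (dif K k1 i * (-1) ^+ par K i * H j l2)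
   + (k1 == i)%:R * ((-1) ^+ par K i * (-1) ^+ par K i) * (dif Q k2 j * H j l2)))); last first.
  by move=> i _; rewrite mulr_sumr; apply: eq_bigr => j _; ring.
rewrite sum_d1 big_split /= sum_d2 -mulr_sumr.
rewrite [X in _ = _ + X](eq_bigr (fun i => (k1 == i)%:R * \sum_j ((j == l2)%:R * ((-1) ^+ par K k1 * H k2 j * dif K i l1)
   + (i == l1)%:R * ((-1) ^+ par K k1 * (-1) ^+ par K l1) * (H k2 j * dif P j l2)))); last first.
  by move=> i _; rewrite mulr_sumr; apply: eq_bigr => j _; ring.
rewrite sum_d2 big_split /= sum_d1 -mulr_sumr.
have [e|ne] := eqVneq k1 l1.
  rewrite -e oK // !mulr1n.
  have ss : (-1) ^+ par K k1 * (-1) ^+ par K k1 = 1 :> R.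
    by case: (par K k1); rewrite ?expr0 ?expr1 ?mulr1 ?mulrNN ?mulr1.
  rewrite ss; ring.
have [pe|pne] := eqVneq (par K k1) (par K l1).
  by rewrite oK // !(mulr0n, mul0r, mulr0, addr0, add0r).
have := sgn_opp pne => h.
move/eqP: h; rewrite addr_eq0 => /eqP ->.
rewrite !(mulr0n, mul0r, addr0, add0r).
move: ((-1) ^+ par K l1) => t; ring.
Qed.
Lemma idtens_mul m n1 n2 n3 (f : 'M[R]_(n2, n1)) (g : 'M[R]_(n3, n2)) :
  idtens m g *m idtens m f = idtens m (g *m f).
Proof.
apply/matrixP => k l; rewrite !mxE sum_tidx.
rewrite (eq_bigr (fun i => (tidx1 k == i)%:R * ((i == tidx1 l)%:R * \sum_j (g (tidx2 k) j * f j (tidx2 l))))); last first.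
  move=> i _; rewrite !mulr_sumr; apply: eq_bigr => j _.
  by rewrite ?mxE tidx1_pair tidx2_pair; ring.
by rewrite sum_d2 ?mxE.
Qed.

Definition H1p : 'M[Rp]_2 := mx2 0 0 (- (p1 * Cp)) (- p2).
Definition H2p : 'M[Rp]_2 := mx2 q2 0 (- (q1 * Cp)) 0.
Definition Hp : 'M[Rp]_(2 + 2) := block_mx 0 H1p H2p 0.


Lemma Rp_ident :
  (block_mx (mx2 0 1 (p2 ^+ 2 - p1 ^+ 2 * Cp) 0) 0 0 (mx2 p2 (- p1) (p1 * Cp) (- p2)) : 'M[Rp]_(2+2))
  *m block_mx (mx2 0 1 (q2 ^+ 2 - q1 ^+ 2 * Cp) 0) 0 0 (mx2 q2 (- q1) (q1 * Cp) (- q2))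
  = block_mx 0 (mx2 q2 q1 (p2 * r2 + p1 * r1 * Cp) (- (p1 * r2 + p2 * r1)))
        (mx2 (p1 * r2 + p2 * r1) q1 (p2 * r2 + p1 * r1 * Cp) (- q2)) 0 *m Hp
    + Hp *m block_mx 0 (mx2 p2 p1 (q2 * r2 + q1 * r1 * Cp) (- (q2 * r1 + q1 * r2)))
        (mx2 (q1 * r2 + q2 * r1) p1 (q2 * r2 + q1 * r1 * Cp) (- p2)) 0.
Proof.
rewrite /Hp !mulmx_block add_block_mx.
congr block_mx; apply/matrixP => i j; rewrite !(mxE, big_ord_recr, big_ord0, add0r);
  case: i => [[|[|//]] ?]; case: j => [[|[|//]] ?] /=; ring.
Qed.

Lemma Hp_odd N (i j : 'I_(2 + 2)) : (2 <= i)%N = (2 <= j)%N -> bc N Hp i j = 0.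
Proof.
rewrite /bc mxE.
rewrite -(splitK i) -(splitK j); case: (split i) => a; case: (split j) => b /=;
  rewrite /Hp ?block_mxEul ?block_mxEur ?block_mxEdl ?block_mxEdr.
- by rewrite mxE raddf0.
- by case: a => [[|[|//]] ?].
- by case: b => [[|[|//]] ?].
- by rewrite mxE raddf0.
Qed.

Theorem mainTheorem4 (N : nat) (hN : (1 <= N)%N) :
  nullhtp (gpar N) (ghor N) (Gmor N *m Fmor N).
Proof.
rewrite /Gmor /Fmor idtens_mul.
apply: (@tens_htp (Kcmn N) (gpar_p N) (ghor_p N) (bc N Hp)).
- by apply: tens_odd; apply: kos_odd.
- by move=> i j /= h; apply: Hp_odd.
- rewrite /Gp_mor /Fp_mor /pmor /bc -!map_mxM -map_mxD /=.
  by rewrite Rp_ident.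
Qed.
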